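(* Let $\nu\in\left(-1,-\tfrac12\right)$. Then there exists $z_\nu\ge j_{\nu,1}$ such that $x\mapsto\mathcal{I}_\nu(x)$ is strictly log-convex on $(0,z_\nu)$ and strictly log-concave on $(z_\nu,\infty)$. In particular, $\mathcal{I}_\nu$ is not log-convex on all of $\mathbb{R}$ for such $\nu$.
   Context: For $\nu>-1$ define $\mathcal{I}_\nu:\mathbb{R}\to[1,\infty)$ by $\mathcal{I}_\nu(x)=\sum_{n\ge0}\frac{(1/4)^n}{(\nu+1)_n\, n!}x^{2n}$, where $(a)_n=a(a+1)\cdots(a+n-1)$, $(a)_0=1$; equivalently $\mathcal{I}_\nu(x)=2^\nu\Gamma(\nu+1)x^{-\nu}I_\nu(x)$ for $x>0$, with $I_\nu$ the modified Bessel function of the first kind. $j_{\nu,1}$ is the first positive zero of the Bessel function of the first kind $J_\nu$. *)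

(* Defs.v *)
From Stdlib Require Import Arith Factorial Reals Lra ClassicalEpsilon.
Open Scope R_scope.

Fixpoint poch (a : R) (n : nat) : R :=
  match n with
  | O => 1
  | S k => poch a k * (a + INR k)
  end.

Definition Iterm (nu x : R) (n : nat) : R :=
  (/ 4) ^ n / (poch (nu + 1) n * INR (fact n)) * x ^ (2 * n).

(* \mathcal{I}_nu(x) = sum_{n>=0} (1/4)^n / ((nu+1)_n n!) x^{2n}
   (the series converges for every real x when nu > -1). *)
Definition calI (nu x : R) : R :=
  epsilon (inhabits 0) (fun l => infinite_sum (Iterm nu x) l).

(* Normalized Bessel function of the first kind:
   calJ nu x = sum_{n>=0} (-1/4)^n / ((nu+1)_n n!) x^{2n},
   so that J_nu(x) = (x/2)^nu / Gamma(nu+1) * calJ nu x for x > 0. *)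
Definition Jterm (nu x : R) (n : nat) : R :=
  (- / 4) ^ n / (poch (nu + 1) n * INR (fact n)) * x ^ (2 * n).

Definition calJ (nu x : R) : R :=
  epsilon (inhabits 0) (fun l => infinite_sum (Jterm nu x) l).

(* j is the first positive zero of J_nu (equivalently of calJ nu, since
   (x/2)^nu / Gamma(nu+1) is nonzero for x > 0, nu > -1). *)
Definition is_first_pos_zero_J (nu j : R) : Prop :=
  0 < j /\ calJ nu j = 0 /\ (forall x, 0 < x < j -> calJ nu x <> 0).

Definition strictly_convex_on (f : R -> R) (a b : R) : Prop :=
  forall x y t, a < x < b -> a < y < b -> x <> y -> 0 < t < 1 ->
    f (t * x + (1 - t) * y) < t * f x + (1 - t) * f y.

Definition strictly_concave_on (f : R -> R) (a b : R) : Prop :=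
  strictly_convex_on (fun x => - f x) a b.

Definition strictly_convex_from (f : R -> R) (a : R) : Prop :=
  forall x y t, a < x -> a < y -> x <> y -> 0 < t < 1 ->
    f (t * x + (1 - t) * y) < t * f x + (1 - t) * f y.

Definition strictly_concave_from (f : R -> R) (a : R) : Prop :=
  strictly_convex_from (fun x => - f x) a.

Definition log_convex_on_R (f : R -> R) : Prop :=
  forall x y t, 0 <= t <= 1 ->
    ln (f (t * x + (1 - t) * y)) <= t * ln (f x) + (1 - t) * ln (f y).

(* Main.v *)
Require Import Defs.
From Stdlib Require Import Reals Lra Lia ClassicalEpsilon Classical FunctionalExtensionality.
From Coquelicot Require Import Coquelicot.
Open Scope R_scope.


Lemma poch_pos e n : 0 < e -> 0 < poch e n.
Proof.
  intros He; induction n as [|n IH]; simpl; [lra|].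
  apply Rmult_lt_0_compat; auto. pose proof (pos_INR n); lra.
Qed.

Definition acoef (nu : R) (n : nat) : R :=
  (/ 4) ^ n / (poch (nu + 1) n * INR (Factorial.fact n)).
Definition jcoef (nu : R) (n : nat) : R :=
  (- / 4) ^ n / (poch (nu + 1) n * INR (Factorial.fact n)).

Lemma acoef_pos nu n : 0 < nu + 1 -> 0 < acoef nu n.
Proof.
  intros H; unfold acoef. apply Rdiv_lt_0_compat.
  apply pow_lt; lra.
  apply Rmult_lt_0_compat. now apply poch_pos. apply lt_0_INR, Factorial.lt_O_fact.
Qed.

Lemma acoef_S nu n : 0 < nu + 1 ->
  acoef nu (S n) = acoef nu n / (4 * (nu + 1 + INR n) * INR (S n)).
Proof.
  intros H; unfold acoef. simpl poch. change (Factorial.fact (S n)) with (S n * Factorial.fact n)%nat. rewrite mult_INR.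
  pose proof (poch_pos _ n H). pose proof (pos_INR n).
  assert (0 < INR (Factorial.fact n)) by apply lt_0_INR, Factorial.lt_O_fact.
  rewrite S_INR. simpl pow. field. repeat split; lra.
Qed.

Lemma jcoef_eq nu n : jcoef nu n = (-1) ^ n * acoef nu n.
Proof.
  unfold jcoef, acoef. replace (- / 4) with ((-1) * / 4) by ring.
  rewrite Rpow_mult_distr. unfold Rdiv. ring.
Qed.

Lemma inv_INR_lim : is_lim_seq (fun n => / INR (S n)) 0.
Proof.
  replace (Finite 0) with (Rbar_inv p_infty) by reflexivity.
  apply is_lim_seq_inv; [|discriminate].
  apply (is_lim_seq_incr_1 INR p_infty), is_lim_seq_INR.
Qed.

Lemma acoef_radius nu : 0 < nu + 1 -> CV_radius (acoef nu) = p_infty.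
Proof.
  intros H. apply CV_radius_infinite_DAlembert.
  - intros n; pose proof (acoef_pos nu n H); lra.
  - apply is_lim_seq_le_le with (u := fun _ => 0)
      (w := fun n => / (4 * (nu+1)) * / INR (S n)).
    + intros n. rewrite acoef_S by auto.
      pose proof (acoef_pos nu n H). pose proof (pos_INR n).
      rewrite S_INR.
      replace (acoef nu n / (4 * (nu + 1 + INR n) * (INR n + 1)) / acoef nu n)
        with (/ (4 * (nu + 1 + INR n) * (INR n + 1))) by (field; repeat split; lra).
      rewrite Rabs_pos_eq.
      2: { left; apply Rinv_0_lt_compat. apply Rmult_lt_0_compat; lra. }
      split. left; apply Rinv_0_lt_compat. apply Rmult_lt_0_compat; lra.
      rewrite <- Rinv_mult. apply Rinv_le_contravar.
      apply Rmult_lt_0_compat; lra. apply Rmult_le_compat_r; lra.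
    + apply is_lim_seq_const.
    + replace (Finite 0) with (Rbar_mult (/ (4 * (nu+1))) 0) by (simpl; f_equal; ring).
      apply is_lim_seq_scal_l, inv_INR_lim.
Qed.


Lemma in_radius nu s : 0 < nu + 1 -> Rbar_lt (Rabs s) (CV_radius (acoef nu)).
Proof. intros H; rewrite acoef_radius by auto; exact I. Qed.

Lemma PSeries_infinite_sum nu s : 0 < nu + 1 ->
  infinite_sum (fun n => acoef nu n * s ^ n) (PSeries (acoef nu) s).
Proof.
  intros H. apply is_series_Reals.
  apply Series_correct. apply ex_pseries_R. now apply CV_radius_inside, in_radius.
Qed.

Lemma calI_eq nu x : 0 < nu + 1 -> calI nu x = PSeries (acoef nu) (x ^ 2).
Proof.
  intros H. unfold calI.
  assert (Hs : infinite_sum (Iterm nu x) (PSeries (acoef nu) (x ^ 2))).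
  { apply is_series_Reals. eapply is_series_ext.
    2: apply is_series_Reals, PSeries_infinite_sum, H.
    intros n; simpl. unfold Iterm, acoef. rewrite pow_mult. reflexivity. }
  apply (uniqueness_sum (Iterm nu x)); auto.
  apply (epsilon_spec (inhabits 0) (fun l => infinite_sum (Iterm nu x) l)).
  eauto.
Qed.

Lemma calJ_eq nu x : 0 < nu + 1 -> calJ nu x = PSeries (acoef nu) (- x ^ 2).
Proof.
  intros H. unfold calJ.
  assert (Hs : infinite_sum (Jterm nu x) (PSeries (acoef nu) (- x ^ 2))).
  { apply is_series_Reals. eapply is_series_ext.
    2: apply is_series_Reals, PSeries_infinite_sum, H.
    intros n. unfold Jterm, acoef. rewrite pow_mult.
    replace (- x^2) with ((-1) * x^2) by ring. replace (- / 4) with ((-1) * / 4) by ring.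
    rewrite !Rpow_mult_distr. unfold Rdiv. match goal with |- ?a = ?b => change (@eq R a b) end. ring. }
  apply (uniqueness_sum (Jterm nu x)); auto.
  apply (epsilon_spec (inhabits 0) (fun l => infinite_sum (Jterm nu x) l)).
  eauto.
Qed.

Definition IA nu s := PSeries (acoef nu) s.
Definition IA1 nu s := PSeries (PS_derive (acoef nu)) s.
Definition IA2 nu s := PSeries (PS_derive (PS_derive (acoef nu))) s.

Lemma A_deriv nu s : 0 < nu + 1 -> is_derive (IA nu) s (IA1 nu s).
Proof. intros H. apply is_derive_PSeries, in_radius, H. Qed.

Lemma radius1 nu : 0 < nu + 1 -> CV_radius (PS_derive (acoef nu)) = p_infty.
Proof. intros H. rewrite CV_radius_derive. now apply acoef_radius. Qed.

Lemma A1_deriv nu s : 0 < nu + 1 -> is_derive (IA1 nu) s (IA2 nu s).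
Proof. intros H. apply is_derive_PSeries. rewrite radius1 by auto. exact I. Qed.

Lemma Series_zero (u : nat -> R) : (forall n, u n = 0) -> Series u = 0.
Proof.
  intros Hu. rewrite (Series_ext u (fun n => 0 * 0)) by (intros; rewrite Hu; ring).
  rewrite Series_scal_l. ring.
Qed.

Lemma ex_series_mult_l (c : R) (u : nat -> R) : ex_series u -> ex_series (fun n => c * u n).
Proof. intros Hu. exact (@ex_series_scal_l R_AbsRing R_CompleteNormedModule c u Hu). Qed.

Lemma ex_series_Rplus (u v : nat -> R) : ex_series u -> ex_series v -> ex_series (fun n => u n + v n).
Proof. intros Hu Hv. exact (@ex_series_plus R_AbsRing R_CompleteNormedModule u v Hu Hv). Qed.

Lemma ODE nu s : 0 < nu + 1 ->
  4 * s * IA2 nu s + 4 * (nu + 1) * IA1 nu s - IA nu s = 0.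
Proof.
  intros H.
  set (a := acoef nu). set (d1 := PS_derive a). set (d2 := PS_derive d1).
  assert (R1 : CV_radius d1 = p_infty) by (apply radius1; auto).
  assert (R2 : CV_radius d2 = p_infty) by (unfold d2; rewrite CV_radius_derive; auto).
  assert (E1 : ex_series (fun k => PS_incr_1 d2 k * s ^ k)).
  { apply ex_pseries_R, ex_pseries_incr_1, CV_radius_inside. rewrite R2; exact I. }
  assert (E2 : ex_series (fun k => d1 k * s ^ k)).
  { apply ex_pseries_R, CV_radius_inside. rewrite R1; exact I. }
  assert (E3 : ex_series (fun k => a k * s ^ k)).
  { apply ex_pseries_R, CV_radius_inside. apply in_radius, H. }
  unfold IA2, IA1, IA. fold a d1 d2.
  assert (Hi : s * PSeries d2 s = PSeries (PS_incr_1 d2) s) by (symmetry; apply PSeries_incr_1).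
  replace (4 * s * PSeries d2 s) with (4 * PSeries (PS_incr_1 d2) s) by (rewrite <- Hi; ring).
  unfold PSeries.
  transitivity (Series (fun k => 4 * (PS_incr_1 d2 k * s ^ k) +
     ((4 * (nu + 1)) * (d1 k * s ^ k) + (-1) * (a k * s ^ k)))).
  { rewrite Series_plus.
    2: apply ex_series_mult_l; exact E1.
    2: apply ex_series_Rplus; apply ex_series_mult_l; assumption.
    rewrite Series_plus by (apply ex_series_mult_l; assumption).
    rewrite !Series_scal_l. ring. }
  apply Series_zero. intros n.
  destruct n as [|m].
  - simpl PS_incr_1. unfold d1, PS_derive, a. rewrite (acoef_S nu 0) by auto.
    change (zero : R) with 0. simpl INR.
    match goal with |- ?x = ?y => change (@eq R x y) end.
    field. lra.
  - simpl PS_incr_1. unfold d2, d1, PS_derive. unfold a.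
    rewrite (acoef_S nu (S m)) by auto.
    pose proof (acoef_pos nu (S m) H). pose proof (pos_INR m).
    rewrite !S_INR.
    match goal with |- ?x = ?y => change (@eq R x y) end.
    field. lra.
Qed.


Lemma ex_series_R_incr_n (u : nat -> R) n : ex_series u -> ex_series (fun k => u (n + k)%nat).
Proof. intros H. exact (proj1 (@ex_series_incr_n R_AbsRing R_NormedModule u n) H). Qed.

Lemma Series_nonneg (u : nat -> R) : (forall n, 0 <= u n) -> ex_series u -> 0 <= Series u.
Proof.
  intros H1 H2. rewrite <- (Series_zero (fun _ => 0)) by auto.
  apply Series_le; auto. intros; split; [lra|auto].
Qed.

Lemma tail_bound (u : nat -> R) : (forall n, 0 <= u n) -> (forall n, u (S n) <= u n / 2) ->
  ex_series u -> Series u <= 2 * u 0%nat.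
Proof.
  intros H1 H2 H3.
  assert (Hb : forall n, u n <= u 0%nat * (/2) ^ n).
  { induction n as [|n IH]; simpl; [lra|]. specialize (H2 n). lra. }
  assert (Hg : Rabs (/2) < 1) by (rewrite Rabs_pos_eq; lra).
  apply Rle_trans with (Series (fun n => u 0%nat * (/2) ^ n)).
  - apply Series_le; [intros; split; auto|]. apply ex_series_mult_l, ex_series_geom, Hg.
  - rewrite Series_scal_l, Series_geom by auto. lra.
Qed.

Lemma exA nu s : 0 < nu + 1 -> ex_series (fun k => acoef nu k * s ^ k).
Proof. intros H. apply ex_pseries_R, CV_radius_inside, in_radius, H. Qed.

Lemma exA1 nu s : 0 < nu + 1 -> ex_series (fun k => PS_derive (acoef nu) k * s ^ k).
Proof. intros H. apply ex_pseries_R, CV_radius_inside. rewrite radius1 by auto. exact I. Qed.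

Lemma A_ge1 nu s : 0 < nu + 1 -> 0 <= s -> 1 <= IA nu s.
Proof.
  intros H Hs. unfold IA, PSeries. rewrite Series_incr_1 by (apply exA; auto).
  replace (acoef nu 0 * s ^ 0) with 1 by (unfold acoef; simpl; field).
  assert (0 <= Series (fun k => acoef nu (S k) * s ^ S k)).
  { apply Series_nonneg. intros n. apply Rmult_le_pos. left; apply acoef_pos; auto.
    apply pow_le; auto. apply (ex_series_R_incr_n (fun k => acoef nu k * s ^ k) 1), exA; auto. }
  lra.
Qed.

Lemma A1_pos nu s : 0 < nu + 1 -> 0 <= s -> 0 < IA1 nu s.
Proof.
  intros H Hs. unfold IA1, PSeries. rewrite Series_incr_1 by (apply exA1; auto).
  assert (0 <= Series (fun k => PS_derive (acoef nu) (S k) * s ^ S k)).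
  { apply Series_nonneg. intros n. unfold PS_derive. apply Rmult_le_pos.
    apply Rmult_le_pos. apply pos_INR. left; apply acoef_pos; auto.
    apply pow_le; auto. apply (ex_series_R_incr_n (fun k => PS_derive (acoef nu) k * s ^ k) 1), exA1; auto. }
  replace (PS_derive (acoef nu) 0 * s ^ 0) with (acoef nu 1) by (unfold PS_derive; simpl; ring).
  pose proof (acoef_pos nu 1 H). lra.
Qed.


Lemma acoef_0 nu : acoef nu 0 = 1.
Proof. unfold acoef; simpl; field. Qed.
Lemma acoef_1 nu : 0 < nu + 1 -> acoef nu 1 = / (4 * (nu + 1)).
Proof. intros H. rewrite acoef_S, acoef_0 by auto. simpl INR. field. lra. Qed.
Lemma acoef_2 nu : 0 < nu + 1 -> acoef nu 2 = / (32 * (nu + 1) * (nu + 2)).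
Proof. intros H. rewrite acoef_S, acoef_1 by auto. rewrite !S_INR. simpl INR. field. lra. Qed.
Lemma acoef_3 nu : 0 < nu + 1 -> acoef nu 3 = / (384 * (nu + 1) * (nu + 2) * (nu + 3)).
Proof. intros H. rewrite acoef_S, acoef_2 by auto. rewrite !S_INR. simpl INR. field. lra. Qed.

Lemma tailA_ratio nu s k : 0 < nu + 1 -> 0 <= s <= 3 ->
  acoef nu (3 + S k) * s ^ (3 + S k) <= acoef nu (3 + k) * s ^ (3 + k) / 2.
Proof.
  intros H Hs. replace (3 + S k)%nat with (S (3 + k)) by lia.
  rewrite acoef_S by auto. rewrite <- tech_pow_Rmult.
  set (c := acoef nu (3 + k)). set (p := s ^ (3 + k)%nat).
  assert (0 < c) by (apply acoef_pos; auto). assert (0 <= p) by (apply pow_le; lra).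
  rewrite S_INR, plus_INR. simpl INR. pose proof (pos_INR k).
  set (D := 4 * (nu + 1 + (1 + 1 + 1 + INR k)) * (1 + 1 + 1 + INR k + 1)).
  assert (Hd : 12 * 4 <= D) by (unfold D; nra).
  assert (s / D <= / 2).
  { apply Rmult_le_reg_l with D; [lra|]. field_simplify; lra. }
  replace (c / D * (s * p)) with ((c * p) * (s / D)) by (field; lra).
  assert (0 <= c * p) by nra. 
  unfold Rdiv at 2. apply Rmult_le_compat_l; auto.
Qed.

Lemma tailA1_ratio nu s k : 0 < nu + 1 -> 0 <= s <= 3 ->
  PS_derive (acoef nu) (2 + S k) * s ^ (2 + S k) <=
  PS_derive (acoef nu) (2 + k) * s ^ (2 + k) / 2.
Proof.
  intros H Hs. unfold PS_derive. replace (S (2 + S k))%nat with (S (S (2 + S k)) - 1)%nat by lia.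
  replace (2 + S k)%nat with (S (2 + k)) by lia.
  replace (S (S (S (2 + k))) - 1)%nat with (S (S (2 + k))) by lia.
  rewrite (acoef_S nu (S (2 + k))) by auto. rewrite <- tech_pow_Rmult.
  set (c := acoef nu (S (2 + k))). set (p := s ^ (2 + k)%nat).
  assert (0 < c) by (apply acoef_pos; auto). assert (0 <= p) by (apply pow_le; lra).
  rewrite !S_INR, plus_INR. simpl INR. pose proof (pos_INR k).
  set (D := 4 * (nu + 1 + (1 + 1 + INR k + 1)) * (1 + 1 + INR k + 1 + 1)).
  replace ((1 + 1 + INR k + 1 + 1) * (c / D) * (s * p))
    with ((c * p) * (s / (4 * (nu + 1 + (1 + 1 + INR k + 1))))) by (unfold D; field; lra).
  replace ((1 + 1 + INR k + 1) * c * p / 2)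
    with ((c * p) * ((1 + 1 + INR k + 1) / 2)) by field.
  assert (0 <= c * p) by nra.
  apply Rmult_le_compat_l; auto.
  apply Rmult_le_reg_l with (4 * (nu + 1 + (1 + 1 + INR k + 1))); [lra|].
  field_simplify; nra.
Qed.

Lemma peel3 (u : nat -> R) : ex_series u ->
  Series u = u 0%nat + u 1%nat + u 2%nat + Series (fun k => u (3 + k)%nat).
Proof. intros H. rewrite (Series_incr_n u 3) by (lia || auto). simpl. ring. Qed.

Lemma peel2 (u : nat -> R) : ex_series u ->
  Series u = u 0%nat + u 1%nat + Series (fun k => u (2 + k)%nat).
Proof. intros H. rewrite (Series_incr_n u 2) by (lia || auto). simpl. ring. Qed.

Lemma A_lower nu s : 0 < nu + 1 -> 0 <= s ->
  1 + s / (4 * (nu + 1)) + s ^ 2 / (32 * (nu + 1) * (nu + 2)) <= IA nu s.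
Proof.
  intros H Hs. unfold IA, PSeries. rewrite peel3 by (apply exA; auto).
  rewrite acoef_0, acoef_1, acoef_2 by auto.
  assert (0 <= Series (fun k => acoef nu (3 + k) * s ^ (3 + k))).
  { apply Series_nonneg. intros n. apply Rmult_le_pos. left; apply acoef_pos; auto.
    apply pow_le; auto. apply (ex_series_R_incr_n (fun k => acoef nu k * s ^ k) 3), exA; auto. }
  set (T := Series _) in *. simpl pow. unfold Rdiv. lra.
Qed.

Lemma A1_bounds nu s : 0 < nu + 1 -> 0 <= s <= 3 ->
  / (4 * (nu + 1)) + 2 * s / (32 * (nu + 1) * (nu + 2)) <= IA1 nu s <=
  / (4 * (nu + 1)) + 2 * s / (32 * (nu + 1) * (nu + 2))
   + 2 * (3 * s ^ 2 / (384 * (nu + 1) * (nu + 2) * (nu + 3))).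
Proof.
  intros H Hs. unfold IA1, PSeries. rewrite peel2 by (apply exA1; auto).
  set (T := Series _).
  assert (Hex : ex_series (fun k => PS_derive (acoef nu) (2 + k) * s ^ (2 + k))).
  { apply (ex_series_R_incr_n (fun k => PS_derive (acoef nu) k * s ^ k) 2), exA1; auto. }
  assert (Hpos : forall n, 0 <= PS_derive (acoef nu) n * s ^ n).
  { intros n. unfold PS_derive. apply Rmult_le_pos. apply Rmult_le_pos. apply pos_INR.
    left; apply acoef_pos; auto. apply pow_le; lra. }
  assert (0 <= T) by (apply Series_nonneg; auto).
  assert (T <= 2 * (PS_derive (acoef nu) 2 * s ^ 2)).
  { apply (tail_bound (fun k => PS_derive (acoef nu) (2 + k) * s ^ (2 + k))); auto.
    intros k. apply tailA1_ratio; auto. }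
  revert H0 H1. unfold PS_derive. rewrite acoef_1, acoef_2, acoef_3 by auto.
  simpl INR. simpl pow. unfold Rdiv. intros. split; lra.
Qed.

Lemma AJ_upper nu s : 0 < nu + 1 -> 0 <= s <= 3 ->
  IA nu (- s) <= 1 - s / (4 * (nu + 1)) + s ^ 2 / (32 * (nu + 1) * (nu + 2))
    + 2 * (s ^ 3 / (384 * (nu + 1) * (nu + 2) * (nu + 3))).
Proof.
  intros H Hs. unfold IA, PSeries. rewrite peel3 by (apply exA; auto).
  set (T := Series _).
  assert (Hex : ex_series (fun k => acoef nu (3 + k) * s ^ (3 + k))).
  { apply (ex_series_R_incr_n (fun k => acoef nu k * s ^ k) 3), exA; auto. }
  assert (HT : Rabs T <= Series (fun k => acoef nu (3 + k) * s ^ (3 + k))).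
  { unfold T. rewrite (Series_ext (fun k => acoef nu (3 + k) * s ^ (3 + k))
                        (fun k => Rabs (acoef nu (3 + k) * (- s) ^ (3 + k)))).
    apply Series_Rabs. eapply ex_series_ext; [|exact Hex]. 
    all: intros k; rewrite Rabs_mult, <- RPow_abs, Rabs_Ropp, (Rabs_pos_eq s) by lra;
      rewrite (Rabs_pos_eq (acoef nu _)) by (left; apply acoef_pos; auto); reflexivity. }
  assert (Series (fun k => acoef nu (3 + k) * s ^ (3 + k)) <= 2 * (acoef nu 3 * s ^ 3)).
  { apply (tail_bound (fun k => acoef nu (3 + k) * s ^ (3 + k))); auto.
    intros n. apply Rmult_le_pos. left; apply acoef_pos; auto. apply pow_le; lra.
    intros k. apply tailA_ratio; auto. }
  pose proof (Rle_abs T).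
  set (S3 := Series (fun k => acoef nu (3 + k) * s ^ (3 + k))) in *.
  revert H0 H1. rewrite acoef_0, acoef_1, acoef_2, acoef_3 by auto.
  replace ((- s) ^ 2) with (s ^ 2) by ring. replace ((- s) ^ 1) with (- s) by ring.
  replace ((- s) ^ 0) with 1 by ring. unfold Rdiv. intros. lra.
Qed.


Lemma DIA nu s : 0 < nu + 1 -> Derive (IA nu) s = IA1 nu s.
Proof. intros H. apply is_derive_unique, A_deriv, H. Qed.
Lemma DIA1 nu s : 0 < nu + 1 -> Derive (IA1 nu) s = IA2 nu s.
Proof. intros H. apply is_derive_unique, A1_deriv, H. Qed.
Lemma exIA nu s : 0 < nu + 1 -> ex_derive (IA nu) s.
Proof. intros H. eexists; apply A_deriv, H. Qed.
Lemma exIA1 nu s : 0 < nu + 1 -> ex_derive (IA1 nu) s.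
Proof. intros H. eexists; apply A1_deriv, H. Qed.

Lemma L_deriv nu x : 0 < nu + 1 ->
  is_derive (fun x => ln (IA nu (x ^ 2))) x (2 * (x * (IA1 nu (x ^ 2) / IA nu (x ^ 2)))).
Proof.
  intros H. pose proof (A_ge1 nu (x^2) H (pow2_ge_0 x)).
  auto_derive; replace (x * (x * 1)) with (x ^ 2) by ring;
    change (fun x0 : R => IA nu x0) with (IA nu).
  - split; [apply exIA; auto|split; [lra|exact I]].
  - rewrite DIA by auto. field. lra.
Qed.

Lemma V_deriv nu x : 0 < nu + 1 ->
  is_derive (fun x => x * (IA1 nu (x ^ 2) / IA nu (x ^ 2))) x
   (/2 + (- (2 * nu + 1)) * (IA1 nu (x ^ 2) / IA nu (x ^ 2))
      - 2 * x ^ 2 * (IA1 nu (x ^ 2) / IA nu (x ^ 2)) ^ 2).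
Proof.
  intros H. pose proof (A_ge1 nu (x^2) H (pow2_ge_0 x)).
  pose proof (ODE nu (x ^ 2) H) as HO.
  auto_derive; replace (x * (x * 1)) with (x ^ 2) by ring;
    change (fun x0 : R => IA nu x0) with (IA nu);
    change (fun x0 : R => IA1 nu x0) with (IA1 nu).
  - split; [apply exIA1; auto|split; [apply exIA; auto| split; [lra|exact I]]].
  - change R in x. rewrite DIA, DIA1 by auto. match goal with |- ?l = ?r => change (@eq R l r) end.
    set (a := IA nu (x ^ 2)) in *. set (a1 := IA1 nu (x ^ 2)) in *.
    set (a2 := IA2 nu (x ^ 2)) in *.
    assert (Ha2 : a2 * (4 * x ^ 2) = a - 4 * (nu + 1) * a1) by lra.
    clearbody a a1 a2.
    replace (x * (1 * ((1 + 1) * (x * 1)) * a2 * / a + a1 * (- (1 * ((1 + 1) * (x * 1)) * a1) * / (a * a))))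
      with ((a2 * (4 * x ^ 2)) / (2 * a) - 2 * x ^ 2 * a1 * a1 / (a * a)) by (field; lra).
    rewrite Ha2. field. lra.
Qed.

Definition rr nu s := IA1 nu s / IA nu s.
Definition Vf nu x := x * rr nu (x ^ 2).
Definition Qf nu x := /2 + (- (2 * nu + 1)) * rr nu (x ^ 2) - 2 * x ^ 2 * rr nu (x ^ 2) ^ 2.
Definition Qd nu x :=
  2 * x * ((- (2 * nu + 1)) * ((IA2 nu (x^2) * IA nu (x^2) - IA1 nu (x^2) * IA1 nu (x^2)) / (IA nu (x^2) * IA nu (x^2)))
   - 2 * (IA1 nu (x^2) / IA nu (x^2)) ^ 2
   - 4 * x ^ 2 * (IA1 nu (x^2) / IA nu (x^2)) *
       ((IA2 nu (x^2) * IA nu (x^2) - IA1 nu (x^2) * IA1 nu (x^2)) / (IA nu (x^2) * IA nu (x^2)))).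

Lemma Vf_deriv nu x : 0 < nu + 1 -> is_derive (Vf nu) x (Qf nu x).
Proof. intros H. apply (V_deriv nu x H). Qed.

Lemma Lf_deriv nu x : 0 < nu + 1 -> is_derive (fun x => ln (IA nu (x ^ 2))) x (2 * Vf nu x).
Proof. intros H. apply (L_deriv nu x H). Qed.

Lemma Qf_deriv nu x : 0 < nu + 1 -> is_derive (Qf nu) x (Qd nu x).
Proof.
  intros H. pose proof (A_ge1 nu (x^2) H (pow2_ge_0 x)).
  unfold Qf, Qd, rr.
  auto_derive; replace (x * (x * 1)) with (x ^ 2) by ring;
    change (fun x0 : R => IA nu x0) with (IA nu);
    change (fun x0 : R => IA1 nu x0) with (IA1 nu).
  - split; [apply exIA1; auto|split; [apply exIA; auto| split; [lra|]]].
    repeat (split; [apply exIA1; auto|split; [apply exIA; auto| split; [lra|]]]). exact I.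
  - change R in x. rewrite DIA, DIA1 by auto.
    match goal with |- ?l = ?r => change (@eq R l r) end.
    set (a := IA nu (x ^ 2)) in *. set (a1 := IA1 nu (x ^ 2)) in *.
    set (a2 := IA2 nu (x ^ 2)) in *. clearbody a a1 a2.
    field. lra.
Qed.

Lemma rr_pos nu s : 0 < nu + 1 -> 0 <= s -> 0 < rr nu s.
Proof.
  intros H Hs. unfold rr. pose proof (A_ge1 nu s H Hs). pose proof (A1_pos nu s H Hs).
  apply Rdiv_lt_0_compat; lra.
Qed.

Lemma Q_zero_neg nu x : 0 < nu + 1 -> nu < - / 2 -> 0 < x -> Qf nu x = 0 -> Qd nu x < 0.
Proof.
  intros H Hnu Hx HQ.
  pose proof (ODE nu (x ^ 2) H) as HO.
  pose proof (A_ge1 nu (x^2) H (pow2_ge_0 x)).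
  pose proof (rr_pos nu (x^2) H (pow2_ge_0 x)) as Hr.
  unfold Qf in HQ. unfold Qd. unfold rr in *.
  assert (Hs : 0 < x ^ 2) by (apply pow_lt; auto).
  set (a := IA nu (x ^ 2)) in *. set (a1 := IA1 nu (x ^ 2)) in *.
  set (a2 := IA2 nu (x ^ 2)) in *. set (s := x ^ 2) in *. clearbody a a1 a2 s.
  set (r := a1 / a) in *.
  assert (Ha1 : a1 = r * a) by (unfold r; field; lra). clearbody r.
  assert (Ha2 : a2 * (4 * s) = a - 4 * (nu + 1) * a1) by lra.
  assert (Hq : 4 * s * r ^ 2 = 1 + 2 * (- (2 * nu + 1)) * r) by nra.
  assert (Hrd : (a2 * a - a1 * a1) / (a * a) = - r / (2 * s)).
  { apply Rmult_eq_reg_r with (4 * s * (a * a)); [|apply Rmult_integral_contrapositive; split; nra].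
    replace ((a2 * a - a1 * a1) / (a * a) * (4 * s * (a * a)))
      with (a2 * (4 * s) * a - 4 * s * a1 * a1) by (field; lra).
    rewrite Ha2, Ha1.
    replace (- r / (2 * s) * (4 * s * (a * a))) with (- 2 * r * a * a) by (field; lra).
    replace (4 * s * (r * a) * (r * a)) with ((4 * s * r ^ 2) * a * a) by ring.
    rewrite Hq. ring. }
  rewrite Hrd.
  assert (0 < r / s) by (apply Rdiv_lt_0_compat; lra).
  replace (2 * x * (- (2 * nu + 1) * (- r / (2 * s)) - 2 * r ^ 2 - 4 * s * r * (- r / (2 * s))))
    with (2 * x * (- (2 * nu + 1)) * (- (r / s) / 2)) by (field; lra).
  assert (0 < 2 * x * (- (2 * nu + 1))) by nra. nra.
Qed.


Lemma cont_pos (f : R -> R) x : continuity_pt f x -> 0 < f x ->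
  exists d, 0 < d /\ forall y, Rabs (y - x) < d -> 0 < f y.
Proof.
  intros Hc Hp. destruct (Hc (f x) Hp) as [d [Hd Hy]].
  exists d; split; auto. intros y Hyx.
  destruct (Req_dec x y) as [<-|Hne]; auto.
  assert (Hl := Hy y (conj (conj I Hne) Hyx)). simpl in Hl. unfold R_dist in Hl.
  apply Rabs_def2 in Hl. lra.
Qed.

Lemma cont_neg (f : R -> R) x : continuity_pt f x -> f x < 0 ->
  exists d, 0 < d /\ forall y, Rabs (y - x) < d -> f y < 0.
Proof.
  intros Hc Hp. destruct (cont_pos (fun t => - f t) x) as [d [Hd H]].
  - apply continuity_pt_opp, Hc.
  - lra.
  - exists d; split; auto. intros y Hy; specialize (H y Hy); simpl in H; lra.
Qed.

Lemma first_zero (f : R -> R) a b : a < b ->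
  (forall x, a <= x <= b -> continuity_pt f x) -> 0 < f a -> f b <= 0 ->
  exists m, a < m <= b /\ f m = 0 /\ (forall w, a <= w < m -> 0 < f w).
Proof.
  intros Hab Hc Ha Hb.
  set (E := fun y => a <= y <= b /\ forall w, a <= w <= y -> 0 < f w).
  assert (HE : bound E) by (exists b; intros y [Hy _]; lra).
  assert (Ea : E a) by (split; [lra|intros w Hw; replace w with a by lra; auto]).
  destruct (completeness E HE (ex_intro _ a Ea)) as [m [Hub Hlub]].
  assert (Ham : a <= m) by (apply Hub; auto).
  assert (Hmb : m <= b) by (apply Hlub; intros y [Hy _]; lra).
  assert (HA : forall w, a <= w < m -> 0 < f w).
  { intros w Hw. destruct (classic (exists y, E y /\ w < y)) as [[y [[Hy1 Hy2] Hwy]]|Hn].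
    - apply Hy2; lra.
    - exfalso. assert (m <= w); [|lra]. apply Hlub. intros y Ey.
      destruct (Rle_lt_dec y w); auto. exfalso; apply Hn; eauto. }
  assert (Hm0 : f m = 0).
  { destruct (Rtotal_order (f m) 0) as [Hneg|[Hz|Hpos]]; auto; exfalso.
    - destruct (cont_neg f m (Hc m (conj Ham Hmb)) Hneg) as [d [Hd Hd']].
      assert (a < m) by (destruct (Req_dec a m) as [<-|]; [lra|lra]).
      set (w := Rmax a (m - d / 2)).
      assert (a <= w < m) by (unfold w; split; [apply Rmax_l|apply Rmax_lub_lt; lra]).
      assert (f w < 0).
      { apply Hd'. unfold w. apply Rabs_def1; [|pose proof (Rmax_r a (m - d/2)); lra].
        assert (Rmax a (m - d/2) < m) by (apply Rmax_lub_lt; lra). lra. }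
      specialize (HA w H0). lra.
    - destruct (cont_pos f m (Hc m (conj Ham Hmb)) Hpos) as [d [Hd Hd']].
      assert (m < b) by (destruct (Req_dec m b) as [->|]; [lra|lra]).
      set (y := Rmin b (m + d / 2)).
      assert (Hy : m < y <= b) by (unfold y; split; [apply Rmin_glb_lt; lra|apply Rmin_l]).
      assert (E y).
      { split; [lra|]. intros w Hw.
        destruct (Rlt_le_dec w m); [apply HA; lra|].
        apply Hd'. pose proof (Rmin_r b (m + d/2)). apply Rabs_def1; unfold y in *; lra. }
      specialize (Hub y H0). lra. }
  exists m. repeat split; auto.
  destruct (Req_dec a m) as [<-|]; [lra|lra].
Qed.

Lemma incr_of_deriv (g h : R -> R) (P : R -> Prop) :
  (forall x y c, P x -> P y -> x <= c <= y -> P c) ->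
  (forall x, P x -> derivable_pt_lim g x (h x)) ->
  (forall x, P x -> 0 < h x) ->
  forall x y, P x -> P y -> x < y -> g x < g y.
Proof.
  intros Hint Hd Hh x y Px Py Hxy.
  destruct (MVT_cor2 g h x y Hxy) as [c [Heq Hc]].
  - intros c Hc. apply Hd, (Hint x y); auto.
  - assert (0 < h c) by (apply Hh, (Hint x y); auto; lra).
    assert (0 < h c * (y - x)) by (apply Rmult_lt_0_compat; lra). lra.
Qed.

Lemma nondecr_of_deriv (g h : R -> R) (P : R -> Prop) :
  (forall x y c, P x -> P y -> x <= c <= y -> P c) ->
  (forall x, P x -> derivable_pt_lim g x (h x)) ->
  (forall x, P x -> 0 <= h x) ->
  forall x y, P x -> P y -> x <= y -> g x <= g y.
Proof.
  intros Hint Hd Hh x y Px Py Hxy.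
  destruct (Req_dec x y) as [<-|Hne]; [lra|].
  destruct (MVT_cor2 g h x y) as [c [Heq Hc]]; [lra| |].
  - intros c Hc. apply Hd, (Hint x y); auto.
  - assert (0 <= h c) by (apply Hh, (Hint x y); auto; lra).
    assert (0 <= h c * (y - x)) by (apply Rmult_le_pos; lra). lra.
Qed.

Lemma convex_of_deriv (f g : R -> R) (P : R -> Prop) :
  (forall x y c, P x -> P y -> x <= c <= y -> P c) ->
  (forall x, P x -> derivable_pt_lim f x (g x)) ->
  (forall x y, P x -> P y -> x < y -> g x < g y) ->
  forall x y t, P x -> P y -> x <> y -> 0 < t < 1 ->
    f (t * x + (1 - t) * y) < t * f x + (1 - t) * f y.
Proof.
  intros Hint Hd Hg.
  assert (K : forall x y t, P x -> P y -> x < y -> 0 < t < 1 ->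
    f (t * x + (1 - t) * y) < t * f x + (1 - t) * f y).
  { intros x y t Px Py Hxy Ht.
    set (p := t * x + (1 - t) * y).
    assert (Hp : x < p < y) by (unfold p; split; nra).
    assert (Pp : P p) by (apply (Hint x y); auto; lra).
    destruct (MVT_cor2 f g x p) as [c1 [E1 H1]]; [lra| |].
    { intros c Hc. apply Hd, (Hint x y); auto; lra. }
    destruct (MVT_cor2 f g p y) as [c2 [E2 H2]]; [lra| |].
    { intros c Hc. apply Hd, (Hint x y); auto; lra. }
    assert (g c1 < g c2) by (apply Hg; try apply (Hint x y); auto; lra).
    assert (Hpx : p - x = (1 - t) * (y - x)) by (unfold p; ring).
    assert (Hyp : y - p = t * (y - x)) by (unfold p; ring).
    assert (0 < t * (1 - t) * (y - x)) by (apply Rmult_lt_0_compat; nra).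
    assert (t * f x + (1 - t) * f y - f p = t * (1 - t) * (y - x) * (g c2 - g c1)).
    { replace (f y) with (f p + g c2 * (y - p)) by lra.
      replace (f x) with (f p - g c1 * (p - x)) by lra.
      rewrite Hpx, Hyp. ring. }
    assert (0 < t * (1 - t) * (y - x) * (g c2 - g c1)) by (apply Rmult_lt_0_compat; lra).
    lra. }
  intros x y t Px Py Hne Ht.
  destruct (Rlt_le_dec x y) as [Hxy|Hyx].
  - apply K; auto.
  - replace (t * x + (1 - t) * y) with ((1 - t) * y + (1 - (1 - t)) * x) by ring.
    replace (t * f x + (1 - t) * f y) with ((1 - t) * f y + (1 - (1 - t)) * f x) by ring.
    apply K; auto; lra.
Qed.


Lemma poly_J e : 0 < e < /2 ->
  - e + e * (1 + e) / 2 + e ^ 2 * (1 + e) ^ 2 / (3 * (2 + e)) < 0.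
Proof.
  intros H. apply Rmult_lt_reg_r with (3 * (2 + e)); [lra|].
  field_simplify; [|lra]. 
  assert (0 < e * e) by nra. nra.
Qed.

Lemma J_neg nu : 0 < nu + 1 -> nu < - / 2 ->
  IA nu (- (4 * (nu + 1) * (nu + 2))) < 0.
Proof.
  intros H1 H2. set (e := nu + 1).
  assert (He : 0 < e < /2) by (unfold e; lra).
  assert (Hs : 0 <= 4 * (nu + 1) * (nu + 2) <= 3) by (split; nra).
  eapply Rle_lt_trans. apply AJ_upper; auto.
  replace nu with (e - 1) by (unfold e; ring).
  replace (e - 1 + 1) with e by ring. replace (e - 1 + 2) with (1 + e) by ring.
  replace (e - 1 + 3) with (2 + e) by ring.
  replace (1 - 4 * e * (1 + e) / (4 * e) + (4 * e * (1 + e)) ^ 2 / (32 * e * (1 + e)) +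
     2 * ((4 * e * (1 + e)) ^ 3 / (384 * e * (1 + e) * (2 + e))))
    with (- e + e * (1 + e) / 2 + e ^ 2 * (1 + e) ^ 2 / (3 * (2 + e))) by (field; lra).
  apply poly_J; auto.
Qed.

Lemma poly_Q e : 0 < e < /2 ->
  0 < (2 + e + e * (1 + e) / 2) ^ 2 / 2
      + (1 - 2 * e) * (2 + e + e * (1 + e) / 2) * ((1 + e) / (4 * e))
      - 2 * (4 * e * (1 + e)) * ((1 + e) / (4 * e) + e * (1 + e) / (4 * (e + 2))) ^ 2.
Proof.
  intros H.
  replace ((2 + e + e * (1 + e) / 2) ^ 2 / 2
      + (1 - 2 * e) * (2 + e + e * (1 + e) / 2) * ((1 + e) / (4 * e))
      - 2 * (4 * e * (1 + e)) * ((1 + e) / (4 * e) + e * (1 + e) / (4 * (e + 2))) ^ 2)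
    with ((12 + 4 * e - 21 * e ^ 2 - 34 * e ^ 3 - 26 * e ^ 4 - 12 * e ^ 5 - 3 * e ^ 6)
           / (8 * (e + 2) ^ 2)) by (field; lra).
  apply Rdiv_lt_0_compat; [|nra].
  assert (0 < e ^ 2) by nra. assert (e ^ 3 <= e ^ 2 / 2) by nra.
  assert (e ^ 4 <= e ^ 3 / 2) by nra. assert (e ^ 5 <= e ^ 4 / 2) by nra.
  assert (e ^ 6 <= e ^ 5 / 2) by nra. assert (e ^ 2 <= / 4) by nra.
  assert (0 < e ^ 3) by nra. assert (0 < e ^ 4) by nra. assert (0 < e ^ 5) by nra.
  assert (0 < e ^ 6) by nra.
  lra.
Qed.

Lemma Q_s0_pos nu : 0 < nu + 1 -> nu < - / 2 ->
  let s0 := 4 * (nu + 1) * (nu + 2) in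
  0 < / 2 + (- (2 * nu + 1)) * rr nu s0 - 2 * s0 * rr nu s0 ^ 2.
Proof.
  intros H1 H2 s0.
  set (e := nu + 1).
  assert (He : 0 < e < /2) by (unfold e; lra).
  assert (Hs : 0 <= s0 <= 3) by (unfold s0; split; nra).
  pose proof (A_lower nu s0 H1 (proj1 Hs)) as HA.
  pose proof (A1_bounds nu s0 H1 Hs) as [HB1 HB2].
  pose proof (poly_Q e He) as HP.
  unfold rr. set (A := IA nu s0) in *. set (B := IA1 nu s0) in *.
  assert (Hs0 : s0 = 4 * e * (1 + e)) by (unfold s0, e; ring).
  rewrite Hs0 in HA, HB1, HB2 |- *.
  replace nu with (e - 1) in HA, HB1, HB2 |- * by (unfold e; ring).
  replace (e - 1 + 1) with e in HA, HB1, HB2 by ring.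
  replace (e - 1 + 2) with (1 + e) in HA, HB1, HB2 by ring.
  replace (e - 1 + 3) with (e + 2) in HB2 by ring.
  replace (1 + 4 * e * (1 + e) / (4 * e) + (4 * e * (1 + e)) ^ 2 / (32 * e * (1 + e)))
    with (2 + e + e * (1 + e) / 2) in HA by (field; lra).
  replace (/ (4 * e) + 2 * (4 * e * (1 + e)) / (32 * e * (1 + e))) with ((1 + e) / (4 * e))
    in HB1, HB2 by (field; lra).
  replace (2 * (3 * (4 * e * (1 + e)) ^ 2 / (384 * e * (1 + e) * (e + 2))))
    with (e * (1 + e) / (4 * (e + 2))) in HB2 by (field; lra).
  set (Alo := 2 + e + e * (1 + e) / 2) in *.
  set (P := (1 + e) / (4 * e)) in *.
  set (Ph := P + e * (1 + e) / (4 * (e + 2))) in *.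
  set (s := 4 * e * (1 + e)) in *.
  assert (0 < P) by (unfold P; apply Rdiv_lt_0_compat; lra).
  assert (0 < Alo) by (unfold Alo; nra).
  assert (0 < s) by (unfold s; nra).
  clearbody Alo P Ph s.
  replace (- (2 * (e - 1) + 1)) with (1 - 2 * e) by ring.
  assert (0 < A) by lra.
  replace (/ 2 + (1 - 2 * e) * (B / A) - 2 * s * (B / A) ^ 2)
    with ((A ^ 2 / 2 + (1 - 2 * e) * A * B - 2 * s * B ^ 2) / A ^ 2) by (field; lra).
  apply Rdiv_lt_0_compat; [|nra].
  assert (A ^ 2 >= Alo ^ 2) by nra.
  assert (A * B >= Alo * P) by nra.
  assert (B ^ 2 <= Ph ^ 2) by nra.
  assert ((1 - 2 * e) * (A * B) >= (1 - 2 * e) * (Alo * P)) by nra.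
  assert (s * B ^ 2 <= s * Ph ^ 2) by nra.
  nra.
Qed.


Lemma deriv_neg_local (f : R -> R) m l : derivable_pt_lim f m l -> l < 0 ->
  exists d, 0 < d /\ (forall y, m - d < y < m -> f m < f y) /\
                     (forall y, m < y < m + d -> f y < f m).
Proof.
  intros Hd Hl. destruct (Hd (- l)) as [[d Hdp] Hd']; [lra|].
  exists d; split; auto. split.
  - intros y Hy. specialize (Hd' (y - m)). simpl in Hd'.
    replace (m + (y - m)) with y in Hd' by ring.
    assert (Hq : Rabs ((f y - f m) / (y - m) - l) < - l)
      by (apply Hd'; [lra|rewrite Rabs_left; lra]).
    apply Rabs_def2 in Hq. destruct Hq as [Hq _].
    assert (Hq2 : (f y - f m) / (y - m) < 0) by lra.
    destruct (Rle_lt_dec (f y) (f m)); auto.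
    exfalso. assert (0 <= (f y - f m) / (y - m)); [|lra].
    unfold Rdiv. replace ((f y - f m) * / (y - m)) with ((f m - f y) * / (m - y)) by (field; lra).
    apply Rmult_le_pos; [lra|]. left; apply Rinv_0_lt_compat; lra.
  - intros y Hy. specialize (Hd' (y - m)). simpl in Hd'.
    replace (m + (y - m)) with y in Hd' by ring.
    assert (Hq : Rabs ((f y - f m) / (y - m) - l) < - l)
      by (apply Hd'; [lra|rewrite Rabs_right; lra]).
    apply Rabs_def2 in Hq. destruct Hq as [Hq _].
    assert (Hq2 : (f y - f m) / (y - m) < 0) by lra.
    destruct (Rle_lt_dec (f m) (f y)); [|auto].
    exfalso. assert (0 <= (f y - f m) / (y - m)); [|lra].
    apply Rmult_le_pos; [lra|]. left; apply Rinv_0_lt_compat; lra.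
Qed.


Lemma dV nu (H1 : 0 < nu + 1) x : derivable_pt_lim (Vf nu) x (Qf nu x).
Proof. apply is_derive_Reals, Vf_deriv, H1. Qed.
Lemma dQ nu (H1 : 0 < nu + 1) x : derivable_pt_lim (Qf nu) x (Qd nu x).
Proof. apply is_derive_Reals, Qf_deriv, H1. Qed.
Lemma cQ nu (H1 : 0 < nu + 1) x : continuity_pt (Qf nu) x.
Proof. apply derivable_continuous_pt. exists (Qd nu x). apply dQ, H1. Qed.

Lemma crossing_strict nu (H1 : 0 < nu + 1) (H2 : nu < - / 2) a b : 0 < a < b -> Qf nu a < 0 -> Qf nu b < 0.
Proof.
  intros Hab Ha. destruct (Rlt_le_dec (Qf nu b) 0) as [|Hb]; auto. exfalso.
  destruct (first_zero (fun x => - Qf nu x) a b) as [m [Hm [Hm0 Hmw]]]; try lra.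
  - intros x _. apply continuity_pt_opp, cQ, H1.
  - assert (Qd nu m < 0) by (apply Q_zero_neg; auto; lra).
    destruct (deriv_neg_local (Qf nu) m _ (dQ nu H1 m) H) as [d [Hd [Hl _]]].
    set (y := Rmax a (m - d / 2)).
    assert (a <= y < m) by (unfold y; split; [apply Rmax_l|apply Rmax_lub_lt; lra]).
    assert (Qf nu m < Qf nu y) by (apply Hl; split; [pose proof (Rmax_r a (m - d/2)); unfold y in *; lra|lra]).
    specialize (Hmw y H0). lra.
Qed.

Lemma crossing nu (H1 : 0 < nu + 1) (H2 : nu < - / 2) a b : 0 < a < b -> Qf nu a <= 0 -> Qf nu b < 0.
Proof.
  intros Hab Ha. destruct Ha as [Ha|Ha]; [apply (crossing_strict nu H1 H2 a b); auto|].
  assert (Qd nu a < 0) by (apply Q_zero_neg; auto; lra).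
  destruct (deriv_neg_local (Qf nu) a _ (dQ nu H1 a) H) as [d [Hd [_ Hr]]].
  set (a' := a + Rmin d (b - a) / 2).
  assert (Hm : 0 < Rmin d (b - a)) by (apply Rmin_glb_lt; lra).
  assert (Rmin d (b - a) <= b - a) by apply Rmin_r.
  assert (Rmin d (b - a) <= d) by apply Rmin_l.
  apply (crossing_strict nu H1 H2 a' b). unfold a'; lra.
  rewrite <- Ha. apply Hr. unfold a'; lra.
Qed.

Lemma Vf_pos nu (H1 : 0 < nu + 1) x : 0 < x -> 0 < Vf nu x.
Proof. intros Hx. unfold Vf. apply Rmult_lt_0_compat; auto. apply rr_pos; auto. apply pow2_ge_0. Qed.

Lemma Qf_V nu x : 0 < x ->
  Qf nu x = / 2 + (- (2 * nu + 1)) * Vf nu x / x - 2 * Vf nu x ^ 2.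
Proof. intros Hx. unfold Qf, Vf. field. lra. Qed.

Lemma exists_neg nu (H1 : 0 < nu + 1) (H2 : nu < - / 2) x0 : 0 < x0 ->
  exists x1, x0 < x1 /\ Qf nu x1 <= 0.
Proof.
  intros Hx0. apply NNPP. intros Hn.
  assert (HQ : forall x, x0 < x -> 0 < Qf nu x).
  { intros x Hx. apply Rnot_le_lt. intros Hle. apply Hn. eauto. }
  set (b := - (2 * nu + 1)). assert (Hb : 0 < b) by (unfold b; lra).
  assert (Hint : forall x y c, x0 < x -> x0 < y -> x <= c <= y -> x0 < c) by (intros; lra).
  assert (Hinc : forall x y, x0 < x -> x0 < y -> x < y -> Vf nu x < Vf nu y).
  { apply (incr_of_deriv (Vf nu) (Qf nu) (fun x => x0 < x)); auto.
    intros x _; apply dV, H1. }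
  assert (Hup : forall x, x0 < x -> Vf nu x < / 2 + b / (2 * x)).
  { intros x Hx. specialize (HQ x Hx). rewrite Qf_V in HQ by lra. fold b in HQ.
    pose proof (Vf_pos nu H1 x ltac:(lra)).
    set (v := Vf nu x) in *. apply Rnot_le_lt. intros Hv.
    assert (Hbx : 0 < b / (2 * x)) by (apply Rdiv_lt_0_compat; lra).
    assert (Hbx' : b / x = 2 * (b / (2 * x))) by (field; lra).
    assert (Hbv : b * v / x = v * (b / x)) by (field; lra).
    rewrite Hbv, Hbx' in HQ. nra. }
  assert (Hhalf : forall x, x0 < x -> Vf nu x <= / 2).
  { intros x Hx. apply Rnot_lt_le. intros Hv.
    set (y := x + b / (Vf nu x - / 2)).
    assert (Hq : 0 < b / (Vf nu x - / 2)) by (apply Rdiv_lt_0_compat; lra).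
    assert (x < y) by (unfold y; lra).
    assert (Vf nu x < Vf nu y) by (apply Hinc; lra).
    assert (Vf nu y < / 2 + b / (2 * y)) by (apply Hup; lra).
    assert (b / (2 * y) < (Vf nu x - / 2)).
    { apply Rmult_lt_reg_r with (2 * y); [lra|].
      unfold Rdiv. rewrite Rmult_assoc, Rinv_l by lra.
      assert (b = (Vf nu x - / 2) * (y - x)) by (unfold y; field; lra).
      nra. }
    lra. }
  set (c := x0 + 1).
  pose proof (Vf_pos nu H1 c ltac:(unfold c; lra)) as Hvc.
  set (m := b * Vf nu c). assert (Hm : 0 < m) by (unfold m; nra).
  assert (Hlow : forall x, c <= x -> m / x <= Qf nu x).
  { intros x Hx. rewrite Qf_V by (unfold c in *; lra). fold b.
    assert (Vf nu c <= Vf nu x).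
    { destruct Hx as [Hx|Hx]; [left; apply Hinc; unfold c in *; lra|rewrite Hx; lra]. }
    assert (0 < Vf nu x) by (apply Vf_pos; unfold c in *; lra).
    assert (Vf nu x <= / 2) by (apply Hhalf; unfold c in *; lra).
    assert (m / x <= b * Vf nu x / x).
    { unfold m, Rdiv. apply Rmult_le_compat_r. left; apply Rinv_0_lt_compat; unfold c in *; lra.
      apply Rmult_le_compat_l; lra. }
    nra. }
  assert (Hh : forall x y, c <= x -> c <= y -> x <= y ->
     Vf nu x - m * ln x <= Vf nu y - m * ln y).
  { apply (nondecr_of_deriv (fun x => Vf nu x - m * ln x) (fun x => Qf nu x - m * / x)
            (fun x => c <= x)).
    - intros; lra.
    - intros x Hx. apply derivable_pt_lim_minus. apply dV, H1.
      apply derivable_pt_lim_scal. apply derivable_pt_lim_ln. unfold c in *; lra.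
    - intros x Hx. specialize (Hlow x Hx). unfold Rdiv in Hlow. lra. }
  set (X := c * exp (/ m)).
  assert (Hex : 1 < exp (/ m)).
  { rewrite <- exp_0. apply exp_increasing. apply Rinv_0_lt_compat; auto. }
  assert (HcX : c <= X) by (unfold X, c in *; nra).
  specialize (Hh c X (Rle_refl c) HcX HcX).
  unfold X in Hh. rewrite ln_mult, ln_exp in Hh by (unfold c; try lra; apply exp_pos).
  assert (m * / m = 1) by (field; lra).
  assert (Vf nu (c * exp (/ m)) <= / 2) by (apply Hhalf; unfold c in *; nra).
  nra.
Qed.


Lemma dlogI nu (H1 : 0 < nu + 1) x :
  derivable_pt_lim (fun x => ln (calI nu x)) x (2 * Vf nu x).
Proof.
  replace (fun x => ln (calI nu x)) with (fun x => ln (IA nu (x ^ 2))).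
  - apply is_derive_Reals, Lf_deriv, H1.
  - apply functional_extensionality. intros y. rewrite calI_eq by auto. reflexivity.
Qed.

Lemma calJ_cont nu (H1 : 0 < nu + 1) x : continuity_pt (calJ nu) x.
Proof.
  replace (calJ nu) with (fun x => IA nu (- x ^ 2)).
  - apply (derivable_continuous_pt (fun x => IA nu (- x ^ 2)) x). apply ex_derive_Reals_0.
    auto_derive. apply exIA, H1.
  - apply functional_extensionality. intros y. rewrite calJ_eq by auto. reflexivity.
Qed.

Theorem mainTheorem12 (nu : R) (hnu : -1 < nu < - / 2) :
  (exists z : R,
      (exists j : R, is_first_pos_zero_J nu j /\ j <= z) /\
      strictly_convex_on (fun x => ln (calI nu x)) 0 z /\
      strictly_concave_from (fun x => ln (calI nu x)) z) /\
  ~ log_convex_on_R (calI nu).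
Proof.
  assert (H1 : 0 < nu + 1) by lra. assert (H2 : nu < - / 2) by lra.
  set (s0 := 4 * (nu + 1) * (nu + 2)).
  assert (Hs0 : 0 < s0) by (unfold s0; nra).
  set (x0 := sqrt s0).
  assert (Hx0 : 0 < x0) by (apply sqrt_lt_R0; auto).
  assert (Hx02 : x0 ^ 2 = s0) by (apply pow2_sqrt; lra).
  assert (HQ0 : 0 < Qf nu x0).
  { unfold Qf. rewrite Hx02. apply Q_s0_pos; auto. }
  assert (HJ0 : calJ nu x0 < 0).
  { rewrite calJ_eq, Hx02 by auto. apply J_neg; auto. }
  destruct (exists_neg nu H1 H2 x0 Hx0) as [x1 [Hx1 HQ1]].
  destruct (first_zero (Qf nu) x0 x1) as [z [Hz [HQz _]]]; auto.
  { intros; apply cQ, H1. }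
  assert (Hpos : forall y, 0 < y < z -> 0 < Qf nu y).
  { intros y Hy. apply Rnot_le_lt. intros Hle.
    pose proof (crossing nu H1 H2 y z ltac:(lra) Hle). lra. }
  assert (Hneg : forall y, z < y -> Qf nu y < 0).
  { intros y Hy. apply (crossing nu H1 H2 z y); lra. }
  destruct (first_zero (calJ nu) 0 x0) as [j [Hj [HJj HJpos]]]; auto.
  { intros; apply calJ_cont, H1. }
  { rewrite calJ_eq by auto. replace (- 0 ^ 2) with 0 by ring. unfold IA.
    rewrite PSeries_0, acoef_0. lra. }
  { lra. }
  assert (Hconc : strictly_concave_from (fun x => ln (calI nu x)) z).
  { unfold strictly_concave_from, strictly_convex_from. intros x y t Hx Hy Hne Ht. cbv beta.
    apply (convex_of_deriv (fun x => - ln (calI nu x)) (fun x => - (2 * Vf nu x))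
             (fun x => z < x)); auto.
    - intros; lra.
    - intros w Hw. apply derivable_pt_lim_opp, dlogI, H1.
    - intros u v Hu Hv Huv.
      assert (Vf nu v < Vf nu u); [|lra].
      assert (- Vf nu u < - Vf nu v); [|lra].
      apply (incr_of_deriv (fun x => - Vf nu x) (fun x => - Qf nu x) (fun x => z < x)); auto.
      + intros; lra.
      + intros w Hw. apply derivable_pt_lim_opp, dV, H1.
      + intros w Hw. specialize (Hneg w Hw). lra. }
  split.
  - exists z. split; [|split].
    + exists j. split; [|lra]. split; [lra|split; auto].
      intros x Hx. specialize (HJpos x ltac:(lra)). lra.
    + unfold strictly_convex_on. intros x y t Hx Hy Hne Ht.
      apply (convex_of_deriv (fun x => ln (calI nu x)) (fun x => 2 * Vf nu x)
             (fun x => 0 < x < z)); auto.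
      * intros; lra.
      * intros w Hw. apply dlogI, H1.
      * intros u v Hu Hv Huv.
        assert (Vf nu u < Vf nu v); [|lra].
        apply (incr_of_deriv (Vf nu) (Qf nu) (fun x => 0 < x < z)); auto.
        -- intros; lra.
        -- intros w Hw. apply dV, H1.
    + exact Hconc.
  - intros HL. specialize (HL (z + 1) (z + 3) (1 / 2) ltac:(lra)).
    unfold strictly_concave_from, strictly_convex_from in Hconc.
    specialize (Hconc (z + 1) (z + 3) (1 / 2) ltac:(lra) ltac:(lra) ltac:(lra) ltac:(lra)).
    cbv beta in Hconc. lra.
Qed.
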